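(* Let $p$ be a prime greater than $3$ and let $x$ be an indeterminate. Then $$\sum_{k=0}^{[p/3]}\frac{(3k)!}{27^k\,k!^3}\big(x^k-(-1)^{[p/3]}(1-x)^k\big)\equiv0\pmod p.$$
   Context: $[y]$ is the greatest integer not exceeding $y$. The congruence is coefficientwise for polynomials with rational coefficients having denominators prime to $p$. *)

(* Defs.v *)
From mathcomp Require Import all_boot all_order all_algebra.
Set Implicit Arguments. Unset Strict Implicit. Unset Printing Implicit Defensive.
Import Order.TTheory GRing.Theory Num.Theory.
Local Open Scope ring_scope.

(* A rational c is p-integral (denominator prime to p) and congruent to 0 mod p:
   in lowest terms, p divides the numerator and does not divide the denominator. *)
Definition rat_cong0 (p : nat) (c : rat) : bool :=
  (p%:Z %| numq c)%Z && ~~ (p%:Z %| denq c)%Z.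

Definition poly_cong0 (p : nat) (P : {poly rat}) : Prop :=
  forall i : nat, rat_cong0 p P`_i.

Definition coefA (k : nat) : rat :=
  ((3 * k)`!)%:R / ((27 ^ k * (k`!) ^ 3)%N)%:R.

(* Main.v *)
From mathcomp Require Import all_boot all_order all_algebra.
From mathcomp Require Import zify ring.
Set Implicit Arguments. Unset Strict Implicit. Unset Printing Implicit Defensive.
Import GRing.Theory.

Require Import Defs.
Lemma bin_trin n k i : k <= n -> 'C(n, k) * 'C(k, i) = 'C(n, i) * 'C(n - i, n - k).
Proof.
move=> kn; case: (leqP i k) => ik.
  apply/eqP; rewrite -(eqn_pmul2r (fact_gt0 i)) -(eqn_pmul2r (fact_gt0 (k - i))).
  rewrite -(eqn_pmul2r (fact_gt0 (n - k))).
  have e1 := bin_fact kn. have e2 := bin_fact ik.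
  have e3 : i <= n by lia.
  have e4 := bin_fact e3.
  have e5 : n - k <= n - i by lia.
  have e6 := bin_fact e5.
  have ee : n - i - (n - k) = k - i by lia.
  rewrite ee in e6.
  have -> : 'C(n, k) * 'C(k, i) * i`! * (k - i)`! * (n - k)`! =
     ('C(k, i) * (i`! * (k - i)`!)) * 'C(n, k) * (n - k)`! by ring.
  rewrite e2.
  have -> : 'C(n, i) * 'C(n - i, n - k) * i`! * (k - i)`! * (n - k)`! =
     ('C(n - i, n - k) * ((n - k)`! * (k - i)`!)) * 'C(n, i) * i`! by ring.
  rewrite e6.
  have -> : k`! * 'C(n, k) * (n - k)`! = 'C(n, k) * (k`! * (n - k)`!) by ring.
  have -> : (n - i)`! * 'C(n, i) * i`! = 'C(n, i) * (i`! * (n - i)`!) by ring.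
  by rewrite e1 e4.
rewrite (bin_small ik) muln0.
case: (leqP i n) => hin; last by rewrite (bin_small hin).
by rewrite (@bin_small (n - i)) ?muln0 //; lia.
Qed.

Lemma sum_trin n m i :
  \sum_(k < n.+1) 'C(n, k) * 'C(m, k) * 'C(k, i) = 'C(n, i) * 'C(m + (n - i), n).
Proof.
rewrite -binomial.Vandermonde big_distrr /=; apply: eq_bigr => k _.
have kn : k <= n by have := ltn_ord k.
rewrite mulnAC bin_trin //; ring.
Qed.
Local Open Scope ring_scope.
Lemma natF0 (F : fieldType) p (hF : p \in [pchar F]) n : ((n%:R : F) == 0) = (p %| n)%N.
Proof. by rewrite (dvdn_pcharf hF). Qed.

Lemma natF_neq0 (F : fieldType) p (hF : p \in [pchar F]) n : (0 < n < p)%N -> (n%:R : F) != 0.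
Proof.
move=> /andP[h0 h1]; rewrite (natF0 hF); apply/negP => /dvdn_leq; lia.
Qed.

Lemma pF (F : fieldType) p (hF : p \in [pchar F]) : (p%:R : F) = 0.
Proof. by apply/eqP; rewrite (natF0 hF). Qed.

Lemma negbin (F : fieldType) p (hF : p \in [pchar F]) a b : (a + b < p)%N ->
  ('C(p.-1 - a, b)%:R : F) = (-1) ^+ b * ('C(a + b, b))%:R.
Proof.
elim: b => [|b IH] hb; first by rewrite !bin0 expr0 mul1r.
have nz : (b.+1%:R : F) != 0 by apply: (natF_neq0 hF); lia.
apply: (mulfI nz).
rewrite -natrM mul_bin_left natrM IH; last by lia.
have e1 : (b.+1 * 'C(a + b.+1, b.+1) = (a + b).+1 * 'C(a + b, b))%N.
  by rewrite -mul_bin_diag addnS.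
rewrite [RHS]mulrCA -natrM e1 natrM.
have -> : (p.-1 - a - b)%N = (p - (a + b + 1))%N by lia.
rewrite natrB; last by lia.
rewrite (pF hF) mulrS !natrD exprS; ring.
Qed.

Lemma a_eq (F : fieldType) p (hF : p \in [pchar F]) n
  (hn : (p %| (3 * n).+1 * (3 * n).+2)%N) (hnp : (2 * n < p)%N) k (hk : (k <= n)%N) :
  ((27 ^ k * k`! ^ 3)%N%:R : F) * ('C(n, k)%:R * 'C(p.-1 - n, k)%:R) = ((3 * k)`!)%:R.
Proof.
have hC : (3 * n%:R + 1) * (3 * n%:R + 2) = 0 :> F.
  apply/eqP; move: hn; rewrite -(natF0 hF) natrM !mulrS natrM.
  move=> /eqP h; rewrite -h; apply/eqP; ring.
have hM : ((p.-1 - n)%:R : F) = - 1 - n%:R.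
  have -> : (p.-1 - n)%N = (p - (n + 1))%N by lia.
  by rewrite natrB ?(pF hF) ?natrD; [ring | lia].
elim: k hk => [|k IH] hk; first by rewrite !bin0 muln0 fact0 expn0 exp1n muln1 !mul1r.
have hk' : (k <= n)%N by lia.
have IH' := IH hk'.
have hA : (k.+1%:R : F) * 'C(n, k.+1)%:R = (n%:R - k%:R) * 'C(n, k)%:R.
  by rewrite -natrM mul_bin_left natrM natrB //; lia.
have hB : (k.+1%:R : F) * 'C(p.-1 - n, k.+1)%:R = (- 1 - n%:R - k%:R) * 'C(p.-1 - n, k)%:R.
  by rewrite -natrM mul_bin_left natrM natrB ?hM //; lia.
have -> : (3 * k.+1)%N = (3 * k).+2.+1 by lia.
rewrite !factS expnS; rewrite !(natrM, natrX).
rewrite !(natrM, natrX) in IH'; rewrite -IH'.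
transitivity (27 * k.+1%:R * ((k.+1%:R * 'C(n, k.+1)%:R) * (k.+1%:R * 'C(p.-1 - n, k.+1)%:R))
   * (27 ^+ k * k`!%:R ^+ 3) : F); first by ring.
rewrite hA hB.
apply/eqP; rewrite -subr_eq0; apply/eqP.
transitivity (- (3 * (k%:R + 1) * (27 ^+ k * k`!%:R ^+ 3 * ('C(n, k)%:R * 'C(p.-1 - n, k)%:R)))
   * ((3 * n%:R + 1) * (3 * n%:R + 2)) : F); first by ring.
by rewrite hC mulr0.
Qed.

Lemma fact_neq0 (F : fieldType) p (hF : p \in [pchar F]) k : (k < p)%N -> ((k`!)%:R : F) != 0.
Proof.
elim: k => [|k IH] hk; first by rewrite fact0 oner_neq0.
rewrite factS natrM mulf_neq0 ?IH //; [apply: (natF_neq0 hF)|]; lia.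
Qed.

Lemma den_neq0 (F : fieldType) p (hF : p \in [pchar F]) (hp3 : (3 < p)%N) k : (k < p)%N ->
  (((27 ^ k * k`! ^ 3)%N)%:R : F) != 0.
Proof.
move=> hk; rewrite natrM !natrX mulf_neq0 ?expf_neq0 ?(fact_neq0 hF) //.
rewrite (_ : 27%N = 3 ^ 3)%N // natrX expf_neq0 //; apply: (natF_neq0 hF); lia.
Qed.

Lemma core (F : fieldType) p (hF : p \in [pchar F]) (hp3 : (3 < p)%N) n
  (hn : (p %| (3 * n).+1 * (3 * n).+2)%N) (hnp : (2 * n < p)%N) i :
  \sum_(0 <= k < n.+1) (((3 * k)`!)%:R / ((27 ^ k * k`! ^ 3)%N)%:R) *
     ((i == k)%:R - (-1) ^+ n * ((-1) ^+ i * 'C(k, i)%:R)) = 0 :> F.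
Proof.
rewrite (@eq_big_nat _ _ _ 0 n.+1 _ (fun k => ('C(n, k)%:R * 'C(p.-1 - n, k)%:R) *
     ((i == k)%:R - (-1) ^+ n * ((-1) ^+ i * 'C(k, i)%:R)))); last first.
  move=> k /andP[_ hk]; congr (_ * _).
  rewrite -(a_eq hF hn hnp (k:=k)); last by lia.
  by rewrite mulrAC mulfV ?mul1r ?(den_neq0 hF) //; lia.
under eq_bigr do rewrite mulrBr.
rewrite sumrB.
have -> : \sum_(0 <= k < n.+1) ('C(n, k)%:R * 'C(p.-1 - n, k)%:R) *
     ((-1) ^+ n * ((-1) ^+ i * 'C(k, i)%:R)) =
   (-1) ^+ n * ((-1) ^+ i * ('C(n, i) * 'C(p.-1 - n + (n - i), n))%N%:R) :> F.
  rewrite -sum_trin natr_sum big_mkord mulr_sumr mulr_sumr; apply: eq_bigr => k _.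
  rewrite !natrM; ring.
case: (leqP i n) => hin.
  rewrite big_mkord (bigD1 (Ordinal (n:=n.+1) (m:=i) ltac:(lia))) //= eqxx mulr1.
  rewrite big1 ?addr0; last first.
    move=> j hj; rewrite (_ : (i == j) = false) ?mulr0 //.
    by apply/negbTE; move: hj; apply: contra => /eqP hij; apply/eqP/val_inj.
  have -> : (p.-1 - n + (n - i))%N = (p.-1 - i)%N by lia.
  rewrite natrM (negbin hF (a:=i) (b:=n)); last by lia.
  rewrite (negbin hF (a:=n) (b:=i)); last by lia.
  have -> : 'C(i + n, n) = 'C(i + n, i).
    by rewrite -[X in 'C(_, X) = _](addKn i n) bin_sub ?leq_addr.
  idtac.
  rewrite (addnC n i) -(signr_odd _ n); case: (odd n); rewrite ?expr0 ?expr1; ring.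
rewrite big_nat big1; last first.
  move=> k hk; rewrite (_ : (i == k) = false) ?mulr0 //; apply/negbTE; lia.
by rewrite bin_small // mul0n mulr0n !mulr0 subr0.
Qed.
Lemma coef1X (R : comNzRingType) k i :
  ((1 - 'X) ^+ k : {poly R})`_i = (-1) ^+ i * 'C(k, i)%:R.
Proof.
have h j : ((-1) ^+ j : {poly R}) = ((-1) ^+ j)%:P by rewrite rmorphXn /= polyCN polyC1.
rewrite exprDn coef_sum.
under eq_bigr => j _ do rewrite expr1n mul1r exprNn coefMn h coefCM coefXn.
case: (leqP i k) => hik.
  rewrite (bigD1 (Ordinal (n:=k.+1) (m:=i) ltac:(lia))) //= eqxx mulr1.
  rewrite big1 ?addr0 ?mulr_natr //.
  move=> j hj; rewrite (_ : (i == j) = false) ?mulr0 ?mul0rn //.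
  by apply/negbTE; move: hj; apply: contra => /eqP hij; apply/eqP/val_inj.
rewrite big1 ?bin_small ?mulr0 //.
move=> j _; rewrite (_ : (i == j) = false) ?mulr0 ?mul0rn //.
have := ltn_ord j; move=> hj; apply/negbTE; apply/eqP; lia.
Qed.

Lemma coefQ (R : comNzRingType) n k i :
  ('X^k - (-1) ^+ n *: (1 - 'X) ^+ k : {poly R})`_i =
  (i == k)%:R - (-1) ^+ n * ((-1) ^+ i * 'C(k, i)%:R).
Proof. by rewrite coefB coefXn coefZ coef1X. Qed.
Definition red (F : fieldType) (c : rat) : F := (numq c)%:~R / (denq c)%:~R.

Definition good (F : fieldType) p (c : rat) (y : F) :=
  ~~ (p %| `|denq c|)%N /\ red F c = y.

Lemma intF0 (F : fieldType) p (hF : p \in [pchar F]) (z : int) :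
  ((z%:~R : F) == 0) = (p %| `|z|)%N.
Proof.
case: z => n; first by rewrite -(natF0 hF).
by rewrite NegzE intrN oppr_eq0 abszN -(natF0 hF).
Qed.

Lemma good_frac (F : fieldType) p (hF : p \in [pchar F]) (a b : int) :
  ~~ (p %| `|b|)%N -> good p (a%:~R / b%:~R : rat) (a%:~R / b%:~R : F).
Proof.
move=> hb.
have hp := pcharf_prime hF.
have bF : (b%:~R : F) != 0 by rewrite (intF0 hF).
have b0 : b != 0 by apply: contraNneq bF => ->.
have bQ : (b%:~R : rat) != 0 by rewrite intr_eq0.
set c := (a%:~R / b%:~R : rat).
have dQ : ((denq c)%:~R : rat) != 0 by rewrite intr_eq0 denq_neq0.
have e : numq c * b = a * denq c.
  apply: (@intr_inj rat); rewrite !intrM.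
  have := divq_num_den c; rewrite {2}/c => /eqP.
  by rewrite eqr_div // => /eqP.
have eF : (numq c)%:~R * b%:~R = a%:~R * (denq c)%:~R :> F by rewrite -!intrM e.
have dF : ((denq c)%:~R : F) != 0.
  apply/negP => /eqP d0.
  move: eF; rewrite d0 mulr0 => /eqP; rewrite mulf_eq0 (negbTE bF) orbF => n0.
  move: n0 (d0); rewrite (intF0 hF) => n0 /eqP; rewrite (intF0 hF) => d1.
  have := coprime_num_den c; rewrite /coprime => /eqP g1.
  have : (p %| gcdn `|numq c| `|denq c|)%N by rewrite dvdn_gcd n0 d1.
  by rewrite g1 dvdn1 => /eqP p1; move: hp; rewrite p1.
split; first by rewrite -(intF0 hF).
by rewrite /red; apply/eqP; rewrite eqr_div // eF.
Qed.

Section Good.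
Lemma good_numden (F : fieldType) p (hF : p \in [pchar F]) c y : good p c y ->
  [/\ ~~ (p %| `|denq c|)%N, c = (numq c)%:~R / (denq c)%:~R & y = (numq c)%:~R / (denq c)%:~R :> F].
Proof. by case=> h1 h2; split => //; rewrite ?divq_num_den -?h2. Qed.
End Good.

Lemma good_add (F : fieldType) p (hF : p \in [pchar F]) c c' (y y' : F) :
  good p c y -> good p c' y' -> good p (c + c') (y + y').
Proof.
move=> /(good_numden hF) [h1 e1 f1] /(good_numden hF) [h2 e2 f2].
have hp := pcharf_prime hF.
have hb : ~~ (p %| `|(denq c * denq c')%R|)%N by rewrite abszM Euclid_dvdM // negb_or h1 h2.
have := good_frac hF (numq c * denq c' + numq c' * denq c)%R hb.
have nzF (d : int) : ~~ (p %| `|d|)%N -> (d%:~R : F) != 0 by move=> hd; rewrite (intF0 hF).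
have dQ : ((denq c)%:~R : rat) != 0 by rewrite intr_eq0 denq_neq0.
have dQ' : ((denq c')%:~R : rat) != 0 by rewrite intr_eq0 denq_neq0.
have dF := nzF _ h1. have dF' := nzF _ h2.
rewrite !intrM !intrD !intrM.
move: dQ dQ' e1 e2.
set N := numq c; set D := denq c; set N' := numq c'; set D' := denq c' => dQ dQ' e1 e2.
have -> : (N%:~R * D'%:~R + N'%:~R * D%:~R) / (D%:~R * D'%:~R) = c + c'.
  by rewrite [in RHS]e1 [in RHS]e2; field; apply/andP; split.
have -> : (N%:~R * D'%:~R + N'%:~R * D%:~R) / (D%:~R * D'%:~R) = y + y' :> F.
  by rewrite f1 f2; field; apply/andP; split.
done.
Qed.

Lemma good_mul (F : fieldType) p (hF : p \in [pchar F]) c c' (y y' : F) :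
  good p c y -> good p c' y' -> good p (c * c') (y * y').
Proof.
move=> /(good_numden hF) [h1 e1 f1] /(good_numden hF) [h2 e2 f2].
have hp := pcharf_prime hF.
have hb : ~~ (p %| `|(denq c * denq c')%R|)%N by rewrite abszM Euclid_dvdM // negb_or h1 h2.
have := good_frac hF (numq c * numq c')%R hb.
have nzF (d : int) : ~~ (p %| `|d|)%N -> (d%:~R : F) != 0 by move=> hd; rewrite (intF0 hF).
have dQ : ((denq c)%:~R : rat) != 0 by rewrite intr_eq0 denq_neq0.
have dQ' : ((denq c')%:~R : rat) != 0 by rewrite intr_eq0 denq_neq0.
have dF := nzF _ h1. have dF' := nzF _ h2.
rewrite !intrM.
move: dQ dQ' e1 e2.
set N := numq c; set D := denq c; set N' := numq c'; set D' := denq c' => dQ dQ' e1 e2.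
have -> : (N%:~R * N'%:~R) / (D%:~R * D'%:~R) = c * c'.
  by rewrite [in RHS]e1 [in RHS]e2; field; apply/andP; split.
have -> : (N%:~R * N'%:~R) / (D%:~R * D'%:~R) = y * y' :> F.
  by rewrite f1 f2; field; apply/andP; split.
done.
Qed.

Lemma good_int (F : fieldType) p (hF : p \in [pchar F]) (z : int) :
  good p (z%:~R : rat) (z%:~R : F).
Proof.
have hp := pcharf_prime hF.
have h1 : ~~ (p %| `|1%R : int|)%N by rewrite /= dvdn1; apply/eqP => e; move: hp; rewrite e.
have := good_frac hF z h1; by rewrite !divr1.
Qed.

Lemma good_nat (F : fieldType) p (hF : p \in [pchar F]) (n : nat) :
  good p (n%:R : rat) (n%:R : F).
Proof. exact: (good_int hF n). Qed.

Lemma good_opp (F : fieldType) p (hF : p \in [pchar F]) c (y : F) :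
  good p c y -> good p (- c) (- y).
Proof.
move=> h; have := good_mul hF (good_int hF (-1)) h.
by rewrite !intrN !mulN1r.
Qed.

Lemma good_exp (F : fieldType) p (hF : p \in [pchar F]) c (y : F) k :
  good p c y -> good p (c ^+ k) (y ^+ k).
Proof.
move=> h; elim: k => [|k IH]; first by rewrite !expr0; exact: (good_nat hF 1).
by rewrite !exprS; apply: good_mul.
Qed.

Lemma good_sum (F : fieldType) p (hF : p \in [pchar F]) (r : seq nat) (f : nat -> rat) (g : nat -> F) :
  (forall k, k \in r -> good p (f k) (g k)) -> good p (\sum_(k <- r) f k) (\sum_(k <- r) g k).
Proof.
move=> h; rewrite big_seq_cond [X in good _ _ X]big_seq_cond.
apply: (big_ind2 (fun c y => good p c y)); first exact: (good_nat hF 0).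
  by move=> ????; apply: good_add.
by move=> k /andP[hk _]; apply: h.
Qed.

Lemma cong0_of_good (F : fieldType) p (hF : p \in [pchar F]) c :
  good p c (0 : F) -> (p%:Z %| numq c)%Z && ~~ (p%:Z %| denq c)%Z.
Proof.
case=> h1 h2; rewrite !dvdzE /= h1 andbT.
have dF : ((denq c)%:~R : F) != 0 by rewrite (intF0 hF).
move: h2; rewrite /red => /eqP; rewrite mulf_eq0 invr_eq0 (negbTE dF) orbF.
by rewrite (intF0 hF).
Qed.

Lemma good_one (F : fieldType) p (hF : p \in [pchar F]) : good p (1 : rat) (1 : F).
Proof. by have := good_nat hF 1; rewrite !mulr1n. Qed.

Theorem theorem2p4 (p : nat) (hp : prime p) (hp3 : (3 < p)%N) :
  poly_cong0 p
    (\sum_(0 <= k < (p %/ 3).+1)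
        coefA k *: ('X^k - (-1) ^+ (p %/ 3) *: (1 - 'X) ^+ k)).
Proof.
move=> i; rewrite /rat_cong0.
have hF := pchar_Fp hp.
have hn : (p %| (3 * (p %/ 3)).+1 * (3 * (p %/ 3)).+2)%N.
  have h3 : (p %% 3 != 0)%N.
    apply/negP => /eqP h0.
    have : (3 %| p)%N by rewrite /dvdn h0.
    by move=> /(prime_nt_dvdP hp (isT : (3 != 1)%N)) e; lia.
  have : (p %% 3 = 1 \/ p %% 3 = 2)%N by lia.
  case=> hm.
    have -> : ((3 * (p %/ 3)).+1 = p)%N by lia.
    by apply: dvdn_mulr.
  have -> : ((3 * (p %/ 3)).+2 = p)%N by lia.
  by apply: dvdn_mull.
have hnp : (2 * (p %/ 3) < p)%N by lia.
rewrite coef_sum.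
under eq_bigr do rewrite coefZ coefQ.
apply: (cong0_of_good hF).
rewrite -(core hF hp3 hn hnp i).
apply: (good_sum hF) => k; rewrite mem_index_iota => /andP[_ hk].
apply: (good_mul hF).
  have hb : ~~ (p %| `|((27 ^ k * k`! ^ 3)%N)%:Z|)%N.
    by rewrite /= -(natF0 hF) (den_neq0 hF hp3) //; lia.
  exact: (good_frac hF ((3 * k)`!)%:Z hb).
apply: (good_add hF); first exact: (good_nat hF).
apply: (good_opp hF); apply: (good_mul hF).
  by apply: (good_exp hF); apply: (good_opp hF); apply: (good_one hF).
apply: (good_mul hF); last exact: (good_nat hF).
by apply: (good_exp hF); apply: (good_opp hF); apply: (good_one hF).
Qed.
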